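(* Let $M=p_1^{n_1}\cdots p_K^{n_K}$ with distinct primes and $n_\nu\in\mathbb{N}$, let $A\oplus B=\mathbb{Z}_M$, and fix $i$. Assume $0\in B$, and that $a_0\neq a_1\in A$ satisfy $p_i^{n_i}\mid a_0-a_1$. Assume further that $a_\mu*F_i$ splits with parity $(B,A)$ for $\mu=0,1$. Then $\Sigma_A(a_0*F_i)$ and $\Sigma_A(a_1*F_i)$ are disjoint.
   Context: $A\oplus B=\mathbb{Z}_M$ means every element of $\mathbb{Z}_M$ is uniquely $a+b$ with $a\in A$, $b\in B$. $F_i=\{0,M/p_i,\dots,(p_i-1)M/p_i\}$, $x*F_i=\{x+f:f\in F_i\}$. For $Z\subset\mathbb{Z}_M$, $\Sigma_A(Z)=\{a\in A: a+b\in Z\text{ for some }b\in B\}$, $\Sigma_B(Z)=\{b\in B: a+b\in Z\text{ for some }a\in A\}$. A fiber $Z=x*F_i$ splits with parity $(B,A)$ if $p_i^{n_i}\mid b-b'$ for all $b,b'\in\Sigma_B(Z)$ and, for all distinct $a,a'\in\Sigma_A(Z)$, $p_i^{n_i-1}\mid a-a'$ but $p_i^{n_i}\nmid a-a'$. *)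

(* Defs.v *)
(* Z_M is modelled as 'Z_M (ordinals mod M); M >= 2 follows
   from the hypotheses of the theorem. *)
From mathcomp Require Import all_boot all_order all_algebra.
Set Implicit Arguments. Unset Strict Implicit. Unset Printing Implicit Defensive.
Import GRing.Theory.
Local Open Scope ring_scope.

(* d | x for a residue x in Z_M (meaningful when d | M): d divides the
   canonical representative of x in {0,...,M-1}. *)
Definition dvdZ (M d : nat) (x : 'Z_M) : bool := (d %| (x : nat))%N.

Definition direct_sum (M : nat) (A B : {set 'Z_M}) : Prop :=
  forall x : 'Z_M, exists! ab : 'Z_M * 'Z_M,
    [&& ab.1 \in A, ab.2 \in B & ab.1 + ab.2 == x].

Definition fiber (M q : nat) (x : 'Z_M) : {set 'Z_M} :=
  [set x + ((k * (M %/ q))%N%:R : 'Z_M) | k : 'I_q].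

Definition SigmaA (M : nat) (A B Z : {set 'Z_M}) : {set 'Z_M} :=
  [set a in A | [exists b in B, a + b \in Z]].

Definition SigmaB (M : nat) (A B Z : {set 'Z_M}) : {set 'Z_M} :=
  [set b in B | [exists a in A, a + b \in Z]].

Definition splits_BA (M q e : nat) (A B Z : {set 'Z_M}) : Prop :=
  (forall b b', b \in SigmaB A B Z -> b' \in SigmaB A B Z ->
     dvdZ (q ^ e)%N (b - b')) /\
  (forall a a', a \in SigmaA A B Z -> a' \in SigmaA A B Z -> a != a' ->
     dvdZ (q ^ e.-1)%N (a - a') && ~~ dvdZ (q ^ e)%N (a - a')).

(* Main.v *)
Require Import Defs.
From mathcomp Require Import all_boot all_order all_algebra.
From mathcomp Require Import zify.
Local Open Scope ring_scope.
Import GRing.Theory.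

Lemma cancel_mod (q k k' R : nat) : prime q -> ~~ (q %| R)%N -> (k < q)%N -> (k' < q)%N ->
  (k * R = k' * R %[mod q])%N -> k = k'.
Proof.
move=> pq nR.
wlog le: k k' / (k' <= k)%N.
  move=> W hk hk' E; case: (leqP k' k) => h; first exact: W.
  by symmetry; apply: W => //; apply: ltnW.
move=> hk hk' /eqP E.
have : (q %| k * R - k' * R)%N by rewrite -eqn_mod_dvd // leq_mul2r le orbT.
rewrite -mulnBl Gauss_dvdl; last by rewrite prime_coprime.
case H: (k - k')%N => [|d]; first lia.
rewrite -H => /dvdn_leq; rewrite H => /(_ isT); lia.
Qed.

Lemma eqZ (M x y : nat) : (1 < M)%N -> (x%:R : 'Z_M) = y%:R -> (x = y %[mod M])%N.
Proof. by move=> hM /(congr1 val); rewrite /= !val_Zp_nat. Qed.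

Lemma ZvalK (M : nat) (x : 'Z_M) : ((x : nat)%:R : 'Z_M) = x.
Proof. exact: natr_Zp. Qed.

Theorem lemma4p7 (K : nat) (p n : 'I_K -> nat) (M : nat) (i : 'I_K)
    (A B : {set 'Z_M}) (a0 a1 : 'Z_M) :
  (forall nu, prime (p nu)) -> injective p -> (forall nu, (0 < n nu)%N) ->
  M = (\prod_(nu < K) p nu ^ n nu)%N ->
  direct_sum A B -> 0 \in B ->
  a0 \in A -> a1 \in A -> a0 != a1 -> dvdZ (p i ^ n i)%N (a0 - a1) ->
  splits_BA (p i) (n i) A B (fiber (p i) a0) ->
  splits_BA (p i) (n i) A B (fiber (p i) a1) ->
  [disjoint SigmaA A B (fiber (p i) a0) & SigmaA A B (fiber (p i) a1)].
Proof.
move=> pr pinj npos HM ds B0 a0A a1A a01 hd S0 S1.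
set q := p i; set e := n i.
have pq : prime q := pr i.
have q0 : (0 < q)%N := prime_gt0 pq.
set R := (\prod_(nu < K | nu != i) p nu ^ n nu)%N.
have MR : M = (q ^ e * R)%N by rewrite HM (bigD1 i).
have nR : ~~ (q %| R)%N.
  rewrite /R Euclid_dvd_prod // big1 // => nu nui.
  rewrite Euclid_dvdX // dvdn_prime2 // andbC.
  by apply/negP => /andP[_ /eqP /pinj E]; rewrite E eqxx in nui.
have e0 : (0 < e)%N := npos i.
have R0 : (0 < R)%N by rewrite lt0n; apply/eqP => R0; rewrite R0 dvdn0 in nR.
have M1 : (1 < M)%N.
  rewrite MR; have := prime_gt1 pq; have : (q <= q ^ e)%N.
    by rewrite -{1}(expn1 q) leq_pexp2l.
  nia.
have Mq : (M %/ q = q ^ e.-1 * R)%N.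
  by rewrite MR -(prednK e0) expnS -mulnA mulKn.
have QM : (q ^ e %| M)%N by rewrite MR dvdn_mulr.
set z : 'I_q := Ordinal q0.
have inF : forall x : 'Z_M, x \in fiber q x.
  by move=> x; apply/imsetP; exists z => //=; rewrite mul0n addr0.
have SB : forall (x a b : 'Z_M), x \in A -> splits_BA q e A B (fiber q x) ->
   a \in A -> b \in B -> a + b \in fiber q x -> (q ^ e %| b)%N.
  move=> x a b xA [Sx _] aA bB abF.
  have := Sx b 0.
  rewrite /dvdZ subr0; apply.
    by rewrite inE bB; apply/existsP; exists a; rewrite aA.
  by rewrite inE B0; apply/existsP; exists x; rewrite xA addr0 inF.
apply/pred0P => a /=; apply/negP => /andP[].
rewrite !inE => /andP[aA /existsP[b /andP[bB]]] /imsetP[k _ Ek].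
move=> /andP[_ /existsP[b' /andP[b'B]]] /imsetP[k' _ Ek'].
have Qb : (q ^ e %| b)%N by apply: (SB a0 a) => //; rewrite Ek; apply/imsetP; exists k.
have Qb' : (q ^ e %| b')%N by apply: (SB a1 a) => //; rewrite Ek'; apply/imsetP; exists k'.
set d := a0 - a1.
have a0E : a0 = a1 + d by rewrite /d addrC subrK.
rewrite a0E in Ek.
have Ek0 := Ek; have Ek0' := Ek'.
move: Ek Ek'; rewrite -[a]ZvalK -[b]ZvalK -[b']ZvalK -[a1]ZvalK -[d]ZvalK -!natrD.
move=> /(@eqZ M _ _ M1) /eqP Ek /(@eqZ M _ _ M1) /eqP Ek'.
have dM : forall x y : nat, (x %% M == y %% M)%N -> (x %% q ^ e == y %% q ^ e)%N.
  by move=> x y /eqP E; rewrite -(modn_dvdm x QM) E modn_dvdm.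
move/dM: Ek => Ek; move/dM: Ek' => Ek'.
have mz : forall x y w : nat, (q ^ e %| x)%N -> ((y + x + w) = (y + w) %[mod q ^ e])%N.
  by move=> x y w; rewrite /dvdn => /eqP H; rewrite addnAC -modnDmr H addn0.
have mz' : forall x y : nat, (q ^ e %| x)%N -> ((y + x) = y %[mod q ^ e])%N.
  by move=> x y; rewrite /dvdn => /eqP H; rewrite -modnDmr H addn0.
rewrite mz' // mz // in Ek.
rewrite mz' // in Ek'.
have Ekk : ((k * (M %/ q)) = (k' * (M %/ q)) %[mod q ^ e])%N.
  by apply/eqP; rewrite -(eqn_modDl a1); rewrite -(eqP Ek) -(eqP Ek').
set t := (q ^ e.-1)%N.
have t0 : (0 < t)%N by rewrite expn_gt0 q0.
have qt : (q ^ e = q * t)%N by rewrite /t -expnS prednK.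
have kk : (k : nat) = k'.
  apply: (@cancel_mod q k k' R pq nR (ltn_ord k) (ltn_ord k')).
  apply/eqP; rewrite -(eqn_pmul2r t0) !muln_modl -qt.
  have -> : (k * R * t = k * (M %/ q))%N by rewrite Mq mulnCA mulnC.
  have -> : (k' * R * t = k' * (M %/ q))%N by rewrite Mq mulnCA mulnC.
  by rewrite Ekk.
have kk' : k = k' by apply: val_inj.
rewrite -kk' in Ek0'.
have H : a1 + d + (k * (M %/ q))%:R + b' = a1 + (k * (M %/ q))%:R + b.
  by rewrite -Ek0 -Ek0' addrAC.
rewrite addrAC [a1 + _ + b]addrAC in H.
move/addIr: H => H2.
rewrite -a0E in H2.
case: (ds (a0 + b')) => [[u v] [_ U]].
have h1 := U (a0, b'); have h2 := U (a1, b).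
have : (a0, b') = (a1, b).
  rewrite -h1 ?a0A ?b'B ?eqxx // -h2 // a1A bB /= H2 eqxx //.
by move=> [E _]; rewrite E eqxx in a01.
Qed.
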